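(* Let $H^*$ be a $k$-factor on $[n]$ and $G\supseteq H^*$ a simple graph on $[n]$. If a planted edge $e\in H^*$ belongs to an alternating circuit in $G$, then $e$ belongs to the core $C_n$ produced by the iterative pruning algorithm run on $G$.
   Context: A $k$-factor on $[n]$ is a $k$-regular simple graph with vertex set $[n]$, identified with its edge set. Edges of $H^*$ are planted (red), edges of $G$ not in $H^*$ are unplanted (blue). An alternating circuit is a closed walk in $G$ with pairwise distinct edges (vertices may repeat) whose edges alternate between planted and unplanted, including between the last and the first edge. Iterative pruning algorithm: assign each vertex $i$ capacity $\kappa_i=k$. Repeat as long as possible: pick a vertex $v$ of the current graph whose current degree equals its current capacity; declare all edges incident to $v$ planted, delete $v$ and its incident edges, and decrease by one the capacity of the other endpoint of each deleted edge; then every vertex whose capacity has dropped to $0$ is deleted together with all its incident edges. The procedure stops when every remaining vertex has degree strictly larger than its capacity. The core $C_n$ is the remaining graph at termination. *)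

(* Defs.v *)
From mathcomp Require Import all_boot.
Set Implicit Arguments. Unset Strict Implicit. Unset Printing Implicit Defensive.

(* Vertex set [n] is 'I_n; a graph is identified with its edge set, each edge
   being a 2-element subset of 'I_n. *)
Definition graph (n : nat) := {set {set 'I_n}}.

Definition simple_graph n (G : graph n) : Prop :=
  forall e, e \in G -> #|e| = 2.

Definition k_factor n (k : nat) (H : graph n) : Prop :=
  simple_graph H /\ forall v : 'I_n, #|[set e in H | v \in e]| = k.

(* The edges traversed by the closed walk visiting vs = [v_0; ...; v_{m-1}]
   and returning to v_0: {v_i, v_{i+1 mod m}}. *)
Definition walk_edges n (vs : seq 'I_n) : seq {set 'I_n} :=
  [seq [set p.1; p.2] | p <- zip vs (rot 1 vs)].

Definition alternating_circuit n (H G : graph n) (vs : seq 'I_n) : Prop :=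
  let es := walk_edges vs in
  [/\ all (fun e => e \in G) es, uniq es &
      cycle (fun a b => (a \in H) != (b \in H)) es].

(* ---- Iterative pruning algorithm ----
   A state is (V, cap): remaining vertex set and current capacities.
   The current graph is the subgraph of G induced on V. *)
Definition cur_deg n (G : graph n) (V : {set 'I_n}) (v : 'I_n) : nat :=
  #|[set e in G | (v \in e) && (e \subset V)]|.

Definition cur_adj n (G : graph n) (V : {set 'I_n}) (v u : 'I_n) : bool :=
  [&& u \in V, v \in V, u != v & [set v; u] \in G].

Definition prune_state n := ({set 'I_n} * ('I_n -> nat))%type.

Inductive prune_step n (G : graph n) : prune_state n -> prune_state n -> Prop :=
| PruneStep (V : {set 'I_n}) (cap : 'I_n -> nat) (v : 'I_n) :
    v \in V -> cur_deg G V v = cap v ->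
    let cap' := fun u => if cur_adj G V v u then (cap u).-1 else cap u in
    let V' := [set u in V :\ v | ~~ (cur_adj G V v u && (cap' u == 0))] in
    prune_step G (V, cap) (V', cap').

Inductive prune_reach n (G : graph n) : prune_state n -> prune_state n -> Prop :=
| prune_refl s : prune_reach G s s
| prune_trans s1 s2 s3 : prune_step G s1 s2 -> prune_reach G s2 s3 ->
    prune_reach G s1 s3.

Definition prune_init n (k : nat) : prune_state n := (setT, fun _ => k).

Definition prune_terminal n (G : graph n) (s : prune_state n) : Prop :=
  forall v, v \in s.1 -> cur_deg G s.1 v != s.2 v.

(* Edge set of the current (remaining) graph; at termination this is the core. *)
Definition cur_graph n (G : graph n) (V : {set 'I_n}) : graph n :=
  [set e in G | e \subset V].

(* Main.v *)
Require Import Defs.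
From mathcomp Require Import all_boot.

Lemma zip0s (S T : Type) (t : seq T) : zip (@nil S) t = [::].
Proof. by case: t. Qed.

Lemma zip_drop' (S T : Type) i (s : seq S) (t : seq T) :
  zip (drop i s) (drop i t) = drop i (zip s t).
Proof.
elim: s i t => [|x s IH] i t; first by rewrite /= !zip0s; case: i.
case: i => [|i]; case: t => [|y t] //=; by case: (drop i s).
Qed.

Lemma zip_take' (S T : Type) i (s : seq S) (t : seq T) :
  zip (take i s) (take i t) = take i (zip s t).
Proof.
elim: s i t => [|x s IH] i t; first by rewrite /= !zip0s; case: i.
case: i => [|i]; case: t => [|y t] //=; by rewrite ?IH ?zip0s.
Qed.

Lemma zip_rot' (S T : Type) i (s : seq S) (t : seq T) :
  size s = size t -> zip (rot i s) (rot i t) = rot i (zip s t).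
Proof.
move=> eq; rewrite /rot zip_cat ?zip_drop' ?zip_take' // !size_drop eq //.
Qed.

Lemma mem_zip' (S T : eqType) (s : seq S) (t : seq T) p :
  p \in zip s t -> p.1 \in s /\ p.2 \in t.
Proof.
elim: s t => [|x s IH] [|y t] //=.
rewrite inE => /orP[/eqP->|/IH[h1 h2]]; rewrite !inE ?eqxx //.
by rewrite h1 h2 !orbT.
Qed.

Lemma walk_rot n i (vs : seq 'I_n) : walk_edges (rot i vs) = rot i (walk_edges vs).
Proof.
by rewrite /walk_edges rot_rot zip_rot' ?size_rot // map_rot.
Qed.

Lemma walk_sub n (vs : seq 'I_n) e :
  e \in walk_edges vs -> e \subset [set y | y \in vs].
Proof.
case/mapP=> p /mem_zip' [h1 h2] ->.
apply/subsetP=> y; rewrite !inE => /orP[]/eqP->; rewrite ?h1 //.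
by rewrite mem_rot in h2.
Qed.

Lemma circ_two n (Hs G : graph n) vs x :
  alternating_circuit Hs G vs -> x \in vs ->
  exists a b, [/\ a \in walk_edges vs, b \in walk_edges vs, x \in a, x \in b &
                  (a \in Hs) != (b \in Hs)].
Proof.
case=> _ _ cyc xvs.
case: (rot_to xvs) => i t E.
have mr : forall e, e \in walk_edges (rot i vs) -> e \in walk_edges vs.
  by move=> e; rewrite walk_rot mem_rot.
rewrite -(rot_cycle i) -walk_rot E in cyc.
rewrite E in mr.
case/lastP: t E cyc mr => [|t z] E cyc mr.
  by move: cyc; rewrite /walk_edges /= eqxx.
have ex: exists h w, rcons t z = h :: w by case: (t) => [|h w] /=; eauto.
case: ex => h [w Ew].
have W : walk_edges (x :: rcons t z) = [set x; h] :: rcons [seq [set p.1; p.2] | p <- zip t w] [set z; x].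
  rewrite /walk_edges rot1_cons -/(rcons (x :: t) z) zip_rcons; last first.
    by rewrite size_rcons.
  by rewrite map_rcons Ew.
rewrite W /= rcons_path last_rcons in cyc.
case/andP: cyc => _ cyc.
exists [set z; x], [set x; h]; split => //.
- by apply: mr; rewrite W inE mem_rcons inE eqxx orbT.
- by apply: mr; rewrite W mem_head.
- by rewrite set22.
- by rewrite set21.
Qed.
Lemma edge2 n (e : {set 'I_n}) u w : #|e| = 2 -> u \in e -> w \in e -> u != w ->
  e = [set u; w].
Proof.
move=> ce ue we uw; apply/eqP; rewrite eq_sym eqEcard cards2 uw ce andbT.
by apply/subsetP=> y; rewrite !inE => /orP[]/eqP->.
Qed.

Definition Pgood n (Hs G : graph n) (S : {set 'I_n}) x :=
  exists f1 f2, [/\ f1 \in G, f1 \notin Hs, x \in f1 & f1 \subset S] /\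
                 [/\ f2 \in Hs, x \in f2 & f2 \subset S].

Lemma step_inv n (Hs G : graph n) (S V : {set 'I_n}) (cap : 'I_n -> nat) (v : 'I_n) :
  simple_graph G -> Hs \subset G -> (forall x, x \in S -> @Pgood n Hs G S x) ->
  (forall u, u \in V -> cap u = cur_deg Hs V u) -> S \subset V ->
  v \in V -> cur_deg G V v = cap v ->
  let cap' := fun u => if cur_adj G V v u then (cap u).-1 else cap u in
  let V' := [set u in V :\ v | ~~ (cur_adj G V v u && (cap' u == 0))] in
  (forall u, u \in V' -> cap' u = cur_deg Hs V' u) /\ S \subset V'.
Proof.
move=> sG HG PS capI SV vV dv cap' V'.
have allP : forall e, e \in G -> v \in e -> e \subset V -> e \in Hs.
  have sub : [set e in Hs | (v \in e) && (e \subset V)] \subset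
             [set e in G | (v \in e) && (e \subset V)].
    by apply/subsetP => f; rewrite !inE => /andP[fH ->]; rewrite (subsetP HG _ fH).
  have eqs : [set e in Hs | (v \in e) && (e \subset V)] =
             [set e in G | (v \in e) && (e \subset V)].
    apply/eqP; rewrite eqEcard sub /=.
    by move: dv; rewrite capI // /cur_deg => ->.
  move=> e eG ve eV.
  have : e \in [set e in G | (v \in e) && (e \subset V)] by rewrite inE eG ve eV.
  by rewrite -eqs inE => /andP[].
have adjH : forall x, cur_adj G V v x -> [set v; x] \in Hs.
  move=> x /and4P[xV _ _ eG]; apply: allP eG _ _; first by rewrite set21.
  by apply/subsetP=> y; rewrite !inE => /orP[]/eqP->.
have vS : v \notin S.
  apply/negP => vS; have [f1 [f2 [[f1G f1H vf1 f1S] _]]] := PS v vS.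
  by move: f1H; rewrite (allP f1 f1G vf1 (subset_trans f1S SV)).
have cap_ge2 : forall x f, cur_adj G V v x -> f \in Hs -> x \in f ->
    f \subset V -> v \notin f -> 1 < cap x.
  move=> x f adj fH xf fV vf.
  have xV : x \in V by case/and4P: adj.
  rewrite capI //; apply/card_gt1P; exists [set v; x], f; split.
  - rewrite inE adjH // set22 /=.
    by case/and4P: adj => _ vV' _ _; apply/subsetP=> y; rewrite !inE => /orP[]/eqP->.
  - by rewrite inE fH xf fV.
  - by apply: contraNneq vf => <-; rewrite set21.
have V'V : V' \subset V.
  by apply/subsetP => y; rewrite inE in_setD1 => /andP[/andP[_ ->]].
have vV' : v \notin V' by rewrite inE in_setD1 eqxx.
split; last first.
  apply/subsetP => x xS; rewrite inE in_setD1 (subsetP SV _ xS) andbT.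
  have xv : x != v by apply: contraNneq vS => <-.
  rewrite xv /=; apply/negP => /andP[adj /eqP c0].
  rewrite /cap' adj in c0.
  have [f1 [f2 [_ [f2H xf2 f2S]]]] := PS x xS.
  have vf2 : v \notin f2 by apply: contra vS => /(subsetP f2S).
  have := cap_ge2 x f2 adj f2H xf2 (subset_trans f2S SV) vf2.
  by move: c0; case: (cap x) => [|[|m]].
move=> u uV'.
have uV : u \in V by apply: (subsetP V'V).
have uv : u != v by apply: contraNneq vV' => <-.
have memE : forall e, ((e \in Hs) && ((u \in e) && (e \subset V'))) =
   ((e \in Hs) && ((u \in e) && (e \subset V)) && (v \notin e)).
  move=> e; apply/idP/idP.
    case/and3P=> eH ue eV'; rewrite eH ue (subset_trans eV' V'V) /=.
    by apply: contra vV' => /(subsetP eV').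
  case/andP=> /and3P[eH ue eV] ve; rewrite eH ue /=.
  apply/subsetP => y ye; rewrite inE in_setD1 (subsetP eV _ ye) andbT.
  have yv : y != v by apply: contraNneq ve => <-.
  rewrite yv /=; apply/negP => /andP[adj /eqP c0].
  rewrite /cap' adj in c0.
  have := cap_ge2 y e adj eH ye eV ve.
  by move: c0; case: (cap y) => [|[|m]].
set B := [set e in Hs | (u \in e) && (e \subset V)].
have hcap : cap u = #|B| by rewrite capI.
rewrite /cap'; case: ifP => adj.
  have fB : [set v; u] \in B.
    rewrite inE adjH // set22 /=.
    by apply/subsetP=> y; rewrite !inE => /orP[]/eqP->.
  have -> : cur_deg Hs V' u = #|B :\ [set v; u]|.
    rewrite /cur_deg; apply: eq_card => e; rewrite !inE memE.
    case eB: ((e \in Hs) && ((u \in e) && (e \subset V))); rewrite ?andbF //=.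
    case/and3P: eB => eH ue _.
    rewrite andbT; apply/idP/idP.
      by move=> ve; apply: contraNneq ve => ->; rewrite set21.
    apply: contraNN => ve.
    by apply/eqP; apply: edge2 => //; [apply: sG; apply: (subsetP HG) | rewrite eq_sym].
  by rewrite hcap (cardsD1 [set v; u] B) fB.
rewrite hcap /cur_deg; apply: eq_card => e; rewrite !inE memE.
case eB: ((e \in Hs) && ((u \in e) && (e \subset V))); rewrite ?andbF //=.
case/and3P: eB => eH ue _.
symmetry; apply/negP => ve.
have eE : e = [set v; u].
  by apply: edge2 => //; [apply: sG; apply: (subsetP HG) | rewrite eq_sym].
move: adj; rewrite /cur_adj uV vV uv /= -eE (subsetP HG _ eH).
by [].
Qed.

Theorem mainTheorem14 (n k : nat) (Hs G : graph n) :
  k_factor k Hs -> simple_graph G -> Hs \subset G ->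
  forall (e : {set 'I_n}) (vs : seq 'I_n),
    e \in Hs -> alternating_circuit Hs G vs -> e \in walk_edges vs ->
  forall final : prune_state n,
    prune_reach G (prune_init n k) final -> prune_terminal G final ->
    e \in cur_graph G final.1.
Proof.
move=> [sH regH] sG HG e vs eH circ ew final reach _.
set S := [set y | y \in vs].
have allG : forall f, f \in walk_edges vs -> f \in G.
  by case: circ => /allP h _ _.
have PS : forall x, x \in S -> @Pgood n Hs G S x.
  move=> x; rewrite inE => xv.
  have [a [b [aw bw xa xb ab]]] := @circ_two n Hs G vs x circ xv.
  case aH: (a \in Hs) ab => /= ab.
    exists b, a; split; split => //; try exact: (@walk_sub n vs); by apply: allG.
  exists a, b; split; split => //; try exact: (@walk_sub n vs); try by apply: allG.
    by rewrite aH.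
  by move: ab; rewrite negbK.
have inv : forall s1 s2, prune_reach G s1 s2 ->
   (forall u, u \in s1.1 -> s1.2 u = cur_deg Hs s1.1 u) /\ S \subset s1.1 ->
   (forall u, u \in s2.1 -> s2.2 u = cur_deg Hs s2.1 u) /\ S \subset s2.1.
  move=> s1 s2; elim => [s|t1 t2 t3 st _ IH] // inv1; apply: IH.
  case: st inv1 => V cap v vV dv /= [ci SV]; exact: step_inv.
have init : forall u, u \in (prune_init n k).1 ->
    (prune_init n k).2 u = cur_deg Hs (prune_init n k).1 u.
  move=> u _; rewrite /= -(regH u) /cur_deg; apply: eq_card => f.
  by rewrite !inE subsetT andbT.
have [_ SV] := inv _ _ reach (conj init (subsetT S)).
rewrite inE (allG _ ew) /=; exact: subset_trans (@walk_sub n vs e ew) SV.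
Qed.
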